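(* Let $\eta_1,\dots,\eta_r\in\mathbb{R}$ be pairwise distinct, let $q_1,\dots,q_r$ be real nonzero polynomials with $\deg q_j=\sigma_j-1$, and let $\gamma=\sigma_1+\dots+\sigma_r$. Let $h:\mathbb{R}\to\mathbb{R}$ be a function with $h\in C^{\gamma-2}(\mathbb{R})$, $h^{(\gamma-2)}$ absolutely continuous, $h(x+1)=-h(x)$ for all $x\in\mathbb{R}$, and $$h(x)=\sum_{j=1}^r q_j(x)e^{\eta_j x},\qquad x\in[0,1).$$ Then there exists $x_0\in\mathbb{R}$ such that $h$ is monotone on each interval $[x_0+k,x_0+k+1)$, $k\in\mathbb{Z}$. *)

(* Defs.v *)
From Stdlib Require Import Reals.
From Coquelicot Require Import Coquelicot.
From mathcomp Require Import all_boot all_algebra.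
From mathcomp Require Import Rstruct.

Open Scope R_scope.

Definition C_n (n : nat) (f : R -> R) : Prop :=
  forall k : nat, (k <= n)%N -> forall x : R,
    ex_derive_n f k x /\ continuous (Derive_n f k) x.

(* Disjointness is encoded by listing the
   intervals in increasing order: a <= u_0 <= v_0 <= u_1 <= ... <= v_{m-1} <= b. *)
Definition abs_cont_on (a b : R) (f : R -> R) : Prop :=
  forall eps : R, 0 < eps -> exists delta : R, 0 < delta /\
    forall (m : nat) (u v : nat -> R),
      (forall i : nat, (i < m)%N -> u i <= v i) ->
      (forall i : nat, (i.+1 < m)%N -> v i <= u i.+1) ->
      (0 < m)%N -> a <= u 0%N -> v m.-1 <= b ->
      sum_f_R0 (fun i => v i - u i) m.-1 < delta ->
      sum_f_R0 (fun i => Rabs (f (v i) - f (u i))) m.-1 < eps.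

Definition abs_cont (f : R -> R) : Prop :=
  forall a b : R, a <= b -> abs_cont_on a b f.

Definition monotone_on_Ico (a b : R) (f : R -> R) : Prop :=
  (forall x y, a <= x -> x <= y -> y < b -> f x <= f y) \/
  (forall x y, a <= x -> x <= y -> y < b -> f y <= f x).

(* Main.v *)
Require Import Defs.
From Stdlib Require Import Reals Lra FunctionalExtensionality Classical Lia.
From Coquelicot Require Import Coquelicot.
From mathcomp Require Import all_boot all_algebra.
From mathcomp Require Import Rstruct.
From mathcomp Require Import zify.
Import GRing.Theory.
Open Scope R_scope.

Lemma dpl_ext f g x l : (forall t, f t = g t) -> derivable_pt_lim f x l -> derivable_pt_lim g x l.
Proof. move=> e H. have -> : g = f by apply: functional_extensionality => t; rewrite e. done. Qed.

Lemma dpl_horner (p : {poly R}) x :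
  derivable_pt_lim (fun t => p.[t]%R) x (p^`()).[x]%R.
Proof.
elim/poly_ind: p => [|p c IH].
  rewrite deriv0 horner0.
  apply: (dpl_ext (fun _ => 0)); first by move=> t; rewrite horner0.
  exact: derivable_pt_lim_const.
rewrite derivMXaddC hornerD hornerM hornerX.
apply: (dpl_ext (fun t => p.[t]%R * t + c)).
  by move=> t; rewrite hornerMXaddC.
have H := derivable_pt_lim_mult (fun t => p.[t]%R) (fun t => t) x _ _ IH (derivable_pt_lim_id x).
have H2 := derivable_pt_lim_plus _ (fun _ => c) x _ _ H (derivable_pt_lim_const c x).
move: H2. rewrite /mult_fct /plus_fct. 
set a := (_ + _). set b := (_ + _)%R. have -> : a = b.
  rewrite /a /b. rewrite !RplusE !RmultE. rewrite addr0 addrC. by rewrite mulr1 mulrC.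
by [].
Qed.
Section EP.
Variable r : nat.
Variable eta : 'I_r -> R.

Definition Fp (p : 'I_r -> {poly R}) (x : R) : R :=
  (\sum_(j < r) (p j).[x] * exp (eta j * x))%R.
Definition Dl (l : R) (p : 'I_r -> {poly R}) : 'I_r -> {poly R} :=
  fun j => ((p j)^`() + (eta j - l) *: p j)%R.
Definition tsize (p : 'I_r -> {poly R}) : nat := (\sum_(j < r) size (p j))%N.

Lemma dpl_sum (s : seq 'I_r) (f f' : 'I_r -> R -> R) x :
  (forall j, derivable_pt_lim (f j) x (f' j x)) ->
  derivable_pt_lim (fun t => \sum_(j <- s) f j t)%R x (\sum_(j <- s) f' j x)%R.
Proof.
move=> H; elim: s => [|j s IH].
  rewrite big_nil; apply: (dpl_ext (fun _ => 0)); first by move=> t; rewrite big_nil.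
  exact: derivable_pt_lim_const.
rewrite big_cons; apply: (dpl_ext (fun t => f j t + \sum_(i <- s) f i t)%R).
  by move=> t; rewrite big_cons.
exact: derivable_pt_lim_plus (H j) IH.
Qed.

Lemma Fp_lin (a b : 'I_r -> {poly R}) l x :
  Fp (fun j => a j - l *: b j)%R x = Fp a x - l * Fp b x.
Proof.
rewrite /Fp RminusE RmultE mulr_sumr -sumrB; apply: eq_bigr => j _.
by rewrite hornerD hornerN hornerZ mulrBl mulrA.
Qed.

Lemma Fp_Dl l p x : Fp (Dl l p) x = Fp (Dl 0 p) x - l * Fp p x.
Proof.
rewrite -Fp_lin /Fp; apply: eq_bigr => j _.
by rewrite !hornerE /= subr0 mulrBl addrA.
Qed.

Lemma dpl_Fp p x : derivable_pt_lim (Fp p) x (Fp (Dl 0 p) x).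
Proof.
rewrite /Fp.
apply: (dpl_sum (index_enum _) (fun j t => (p j).[t] * exp (eta j * t))%R
   (fun j t => (Dl 0 p j).[t] * exp (eta j * t))%R) => j.
have He : derivable_pt_lim (fun t => exp (eta j * t)) x (eta j * exp (eta j * x)).
  have H1 : derivable_pt_lim (fun t => eta j * t) x (eta j).
    have := derivable_pt_lim_scal id (eta j) x 1 (derivable_pt_lim_id x).
    by rewrite Rmult_1_r.
  have := derivable_pt_lim_comp _ exp x _ _ H1 (derivable_pt_lim_exp (eta j * x)).
  by rewrite Rmult_comm.
have := derivable_pt_lim_mult _ _ x _ _ (dpl_horner (p j) x) He.
rewrite /mult_fct /Dl; congr derivable_pt_lim.
by rewrite !hornerE /= subr0 mulrDl (mulrC (eta j)).
Qed.
End EP.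
Section EP2.
Variable r : nat.
Variable eta : 'I_r -> R.
Notation Fp := (@Fp r eta).
Notation Dl := (@Dl r eta).
Notation tsize := (@tsize r).

Lemma sz_Dl l p j : (size (Dl l p j) <= size (p j))%N.
Proof.
rewrite /Dl; apply: leq_trans (size_polyD _ _) _; rewrite geq_max size_scale_leq andbT.
have [->|nz] := eqVneq (p j) 0%R; first by rewrite deriv0.
exact: ltnW (lt_size_deriv nz).
Qed.

Lemma tsize_Dl l p : (tsize (Dl l p) <= tsize p)%N.
Proof. by apply: leq_sum => j _; apply: sz_Dl. Qed.

Lemma tsize_Dl_lt p j : p j != 0%R -> (tsize (Dl (eta j) p) < tsize p)%N.
Proof.
move=> nz; rewrite /tsize (bigD1 j) //= [X in (_ < X)%N](bigD1 j) //=.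
have H1 : (size (Dl (eta j) p j) < size (p j))%N.
  by rewrite /Dl subrr scale0r addr0; exact: lt_size_deriv.
have H2 : (\sum_(i < r | i != j) size (Dl (eta j) p i) <= \sum_(i < r | i != j) size (p i))%N.
  by apply: leq_sum => i _; exact: sz_Dl.
apply: leq_trans (leq_add H1 H2); by rewrite addSn.
Qed.

Lemma tsize0 p : tsize p = 0%N -> forall x, Fp p x = 0.
Proof.
move=> H x; rewrite /Fp big1 // => j _.
have : size (p j) = 0%N.
  apply/eqP; rewrite -leqn0 -H /tsize (bigD1 j) //=; exact: leq_addr.
by move/eqP; rewrite size_poly_eq0 => /eqP ->; rewrite horner0 mul0r.
Qed.

Lemma tsize_nz p : tsize p <> 0%N -> exists j, p j != 0%R.
Proof.
move=> H; apply: NNPP => Hn; apply: H; rewrite /tsize big1 // => j _.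
apply/eqP; rewrite size_poly_eq0; apply/negPn/negP => Hj; apply: Hn; by exists j.
Qed.

Lemma dpl_psi l p s k c :
  derivable_pt_lim (fun t => exp (- l * t) * (s * Fp p (t - k))) c
    (exp (- l * c) * (s * Fp (Dl l p) (c - k))).
Proof.
have H1 : derivable_pt_lim (fun t => - l * t) c (- l).
  have := derivable_pt_lim_scal id (- l) c 1 (derivable_pt_lim_id c).
  by rewrite Rmult_1_r.
have He := derivable_pt_lim_comp _ exp c _ _ H1 (derivable_pt_lim_exp (- l * c)).
have H2 : derivable_pt_lim (fun t => t - k) c 1.
  have := derivable_pt_lim_minus id (fun _ => k) c 1 0 (derivable_pt_lim_id c)
    (derivable_pt_lim_const k c).
  by rewrite Rminus_0_r.
have HF := derivable_pt_lim_comp _ (Fp p) c _ _ H2 (@dpl_Fp r eta p (c - k)).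
have HS := derivable_pt_lim_scal _ s c _ HF.
have := derivable_pt_lim_mult _ _ c _ _ He HS.
rewrite /mult_fct /comp /=; congr derivable_pt_lim.
rewrite (@Fp_Dl r eta l p) /mult_real_fct /Ranalysis1.comp. ring.
Qed.

Lemma core_mvt l p s k sg a b : a < b ->
  sg * (exp (- l * a) * (s * Fp p (a - k))) >
  sg * (exp (- l * b) * (s * Fp p (b - k))) ->
  exists c, a < c < b /\ sg * (s * Fp (Dl l p) (c - k)) < 0.
Proof.
move=> ab H.
have [c [Hc1 Hc2]] := MVT_cor2 _ _ a b ab (fun c _ => dpl_psi l p s k c).
exists c; split => //.
have Ep := exp_pos (- l * c).
set E := exp (- l * c) in Hc1 Ep. set X := s * Fp (Dl l p) (c - k) in Hc1 *.
set A := exp (- l * a) * (s * Fp p (a - k)) in H Hc1.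
set B := exp (- l * b) * (s * Fp p (b - k)) in H Hc1.
have : sg * (E * X) * (b - a) < 0 by rewrite Rmult_assoc -Hc1; nra.
move=> H3.
have : sg * X * (E * (b - a)) < 0 by replace (sg * X * (E * (b - a))) with (sg * (E * X) * (b - a)) by ring.
move=> H4. have : 0 < E * (b - a) by apply: Rmult_lt_0_compat; lra.
move=> H5. nra.
Qed.
End EP2.
Section EP3.
Variable r : nat.
Variable eta : 'I_r -> R.
Notation Fp := (@Fp r eta).
Notation Dl := (@Dl r eta).
Notation tsize := (@tsize r).

Lemma pos_psi sg l a X : 0 < sg * X -> sg * (exp (- l * a) * (1 * X)) > 0.
Proof. move=> H; have := exp_pos (- l * a); nra. Qed.
Lemma neg_psi sg l a X : sg * X < 0 -> sg * (exp (- l * a) * (1 * X)) < 0.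
Proof. move=> H; have := exp_pos (- l * a); nra. Qed.

Lemma core0 l p sg a b : a < b -> 0 < sg * Fp p a -> sg * Fp p b < 0 ->
  exists c, a < c < b /\ sg * Fp (Dl l p) c < 0.
Proof.
move=> ab ha hb.
have Hab : sg * (exp (- l * a) * (1 * Fp p (a - 0))) >
  sg * (exp (- l * b) * (1 * Fp p (b - 0))).
  rewrite !Rminus_0_r; have := @pos_psi sg l a _ ha; have := @neg_psi sg l b _ hb; lra.
have [c [Hc H]] := @core_mvt r eta l p 1 0 sg a b ab Hab.
by exists c; split => //; move: H; rewrite Rminus_0_r Rmult_1_l.
Qed.

Lemma L1 p sg a b : (tsize p <= 1)%N -> a < b -> 0 < sg * Fp p a -> sg * Fp p b < 0 -> False.
Proof.
move=> hs ab ha hb.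
have [H0|H0] := eqVneq (tsize p) 0%N.
  by move: ha; rewrite (@tsize0 r eta p H0 a); lra.
have H0' : tsize p <> 0%N by move/eqP: H0.
have [j nz] := @tsize_nz r p H0'.
have [c [Hc Hn]] := @core0 (eta j) p sg a b ab ha hb.
have Hz : tsize (Dl (eta j) p) = 0%N.
  have := @tsize_Dl_lt r eta p j nz; lia.
by move: Hn; rewrite (@tsize0 r eta _ Hz c); lra.
Qed.

Lemma L2 p sg a b c : (tsize p <= 2)%N -> a < b -> b < c -> 0 < sg * Fp p a ->
  sg * Fp p b < 0 -> 0 < sg * Fp p c -> False.
Proof.
move=> hs ab bc ha hb hc.
have [H0|H0] := eqVneq (tsize p) 0%N.
  by move: ha; rewrite (@tsize0 r eta p H0 a); lra.
have H0' : tsize p <> 0%N by move/eqP: H0.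
have [j nz] := @tsize_nz r p H0'.
have [d [Hd Hnd]] := @core0 (eta j) p sg a b ab ha hb.
have hb' : 0 < (- sg) * Fp p b by lra.
have hc' : (- sg) * Fp p c < 0 by lra.
have [e [He Hne]] := @core0 (eta j) p (- sg) b c bc hb' hc'.
have Hz : (tsize (Dl (eta j) p) <= 1)%N.
  have := @tsize_Dl_lt r eta p j nz; lia.
apply: (@L1 _ (- sg) d e Hz); lra.
Qed.
End EP3.
Definition fl (x : R) : Z := Z.sub (up x) 1.

Lemma fl_spec x : IZR (fl x) <= x < IZR (fl x) + 1.
Proof. rewrite /fl minus_IZR; have [h1 h2] := archimed x; simpl; lra. Qed.

Lemma fl_unique k x : IZR k <= x < IZR k + 1 -> fl x = k.
Proof.
move=> [h1 h2]; rewrite /fl.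
have -> : up x = Z.add k 1 by symmetry; apply: tech_up; rewrite plus_IZR /=; lra.
lia.
Qed.

Definition sgZ (k : Z) : R := if Z.even k then 1 else -1.

Lemma sgZ_succ k : sgZ (Z.add k 1) = - sgZ k.
Proof.
rewrite /sgZ Z.add_1_r Z.even_succ -Z.negb_even.
by case: (Z.even k) => /=; lra.
Qed.
Lemma sgZ_pred k : sgZ (Z.pred k) = - sgZ k.
Proof.
rewrite /sgZ Z.even_pred -Z.negb_even.
by case: (Z.even k) => /=; lra.
Qed.
Lemma sgZ_sq k : sgZ k * sgZ k = 1.
Proof. rewrite /sgZ; case: (Z.even k); lra. Qed.
Lemma sgZ_pm k : sgZ k = 1 \/ sgZ k = -1.
Proof. rewrite /sgZ; case: (Z.even k); auto. Qed.

Lemma anti_iter (f : R -> R) : (forall x, f (x + 1) = - f x) ->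
  forall k x, f (x + IZR k) = sgZ k * f x.
Proof.
move=> H k; elim/Z.peano_ind: k => [|k IH|k IH] x.
- by rewrite Rplus_0_r /sgZ /=; ring.
- rewrite succ_IZR -Z.add_1_r sgZ_succ -Rplus_assoc H IH; ring.
- rewrite sgZ_pred. have := H (x + IZR (Z.pred k)).
  rewrite Rplus_assoc -succ_IZR Z.succ_pred IH => E.
  have -> : f (x + IZR (Z.pred k)) = - (sgZ k * f x) by rewrite E; ring.
  ring.
Qed.

Section PER.
Variable r : nat.
Variable eta : 'I_r -> R.
Notation Fp := (@Fp r eta).
Notation Dl := (@Dl r eta).
Notation tsize := (@tsize r).

Definition G p x := sgZ (fl x) * Fp p (x - IZR (fl x)).
Definition bnd p := Fp p 1 = - Fp p 0.

Lemma G_anti p x : G p (x + 1) = - G p x.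
Proof.
rewrite /G (@fl_unique (Z.add (fl x) 1) (x + 1)); last first.
  rewrite plus_IZR; have := fl_spec x; lra.
rewrite sgZ_succ plus_IZR.
have -> : x + 1 - (IZR (fl x) + 1) = x - IZR (fl x) by ring.
ring.
Qed.

Lemma G_open p k x : IZR k <= x < IZR k + 1 -> G p x = sgZ k * Fp p (x - IZR k).
Proof. by move=> H; rewrite /G (@fl_unique k x H). Qed.

Lemma G_closed p k x : bnd p -> IZR k <= x <= IZR k + 1 ->
  G p x = sgZ k * Fp p (x - IZR k).
Proof.
move=> hb [h1 h2]; case: (Rle_lt_or_eq_dec _ _ h2) => h2'.
  by apply: G_open; lra.
rewrite h2' /G (@fl_unique (Z.add k 1) (IZR k + 1)); last by rewrite plus_IZR; lra.
rewrite plus_IZR sgZ_succ.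
have -> : IZR k + 1 - (IZR k + 1) = 0 by ring.
have -> : IZR k + 1 - IZR k = 1 by ring.
rewrite hb; ring.
Qed.

Lemma pmvt l p sg a b : bnd p -> a < b -> b < a + 1 ->
  sg * (exp (- l * a) * G p a) > sg * (exp (- l * b) * G p b) ->
  exists c, a < c < b /\ sg * G (Dl l p) c < 0.
Proof.
move=> hb ab ba H.
set k := fl a; have [hk1 hk2] := fl_spec a; rewrite -/k in hk1 hk2.
case: (Rle_lt_dec b (IZR k + 1)) => hbk.
  rewrite (@G_closed p (k) a hb) in H; last lra.
  rewrite (@G_closed p (k) b hb) in H; last lra.
  have [c [Hc Hn]] := @core_mvt r eta l p (sgZ k) (IZR k) sg a b ab H.
  by exists c; split => //; rewrite (@G_open _ k c) //; lra.
set m := IZR k + 1.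
have Gm1 : G p m = sgZ k * Fp p (m - IZR k) by apply: (@G_closed p k m hb); rewrite /m; lra.
have Gm2 : G p m = sgZ (Z.add k 1) * Fp p (m - IZR (Z.add k 1)).
  by apply: (@G_closed p (Z.add k 1) m hb); rewrite /m plus_IZR; lra.
case: (Rlt_le_dec (sg * (exp (- l * m) * G p m)) (sg * (exp (- l * a) * G p a))) => Hm.
  rewrite (@G_closed p (k) a hb) in Hm; last lra.
  rewrite Gm1 in Hm.
  have [c [Hc Hn]] := @core_mvt r eta l p (sgZ k) (IZR k) sg a m ltac:(rewrite /m; lra) Hm.
  by exists c; split; [rewrite /m in Hc; lra| rewrite (@G_open _ k c) //; rewrite /m in Hc; lra].
have Hm' : sg * (exp (- l * m) * G p m) > sg * (exp (- l * b) * G p b) by lra.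
rewrite (@G_closed p (Z.add k 1) b hb) in Hm'; last by rewrite plus_IZR; rewrite /m in hbk; lra.
rewrite Gm2 in Hm'.
have [c [Hc Hn]] := @core_mvt r eta l p (sgZ (Z.add k 1)) (IZR (Z.add k 1)) sg m b ltac:(rewrite /m; lra) Hm'.
exists c; split; first by rewrite /m in Hc; lra.
by rewrite (@G_open _ (Z.add k 1) c) //; rewrite plus_IZR; rewrite /m in Hc; lra.
Qed.
End PER.
Definition triple (g : R -> R) sg := exists t0 t1 t2, t0 < t1 /\ t1 < t2 /\ t2 < t0 + 1 /\
  0 < sg * g t0 /\ sg * g t1 < 0 /\ 0 < sg * g t2.

Section CH.
Variable r : nat.
Variable eta : 'I_r -> R.
Notation Fp := (@Fp r eta).
Notation Dl := (@Dl r eta).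
Notation tsize := (@tsize r).
Notation G := (@G r eta).
Notation bnd := (@bnd r eta).

Lemma e0 l a : exp (- l * a) > 0. Proof. exact: exp_pos. Qed.

Lemma step l p sg : bnd p -> triple (G p) sg -> triple (G (Dl l p)) (- sg).
Proof.
move=> hb [t0 [t1 [t2 [h01 [h12 [h20 [g0 [g1 g2]]]]]]]].
have ga : G p (t0 + 1) = - G p t0 by apply: G_anti.
have [c0 [Hc0 N0]] : exists c, t0 < c < t1 /\ sg * G (Dl l p) c < 0.
  apply: (@pmvt r eta l p sg t0 t1 hb h01 ltac:(lra)).
  have := e0 l t0; have := e0 l t1; nra.
have [c1 [Hc1 N1]] : exists c, t1 < c < t2 /\ (- sg) * G (Dl l p) c < 0.
  apply: (@pmvt r eta l p (- sg) t1 t2 hb h12 ltac:(lra)).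
  have := e0 l t2; have := e0 l t1; nra.
have [c2 [Hc2 N2]] : exists c, t2 < c < t0 + 1 /\ sg * G (Dl l p) c < 0.
  apply: (@pmvt r eta l p sg t2 (t0 + 1) hb h20 ltac:(lra)).
  rewrite ga; have := e0 l t2; have := e0 l (t0 + 1); nra.
exists c0, c1, c2; repeat split; try lra.
Qed.

Lemma polyid (A C : {poly R}) e l :
  ((A - l *: C)^`() + e *: (A - l *: C))%R = ((A^`() + e *: A) - l *: (C^`() + e *: C))%R.
Proof.
rewrite derivB derivZ !scalerBr !scalerDr !scalerA mulrC.
by rewrite opprD addrACA.
Qed.

Lemma iter_Dl_fun m l p :
  iter m (Dl 0) (Dl l p) = fun j => (iter m.+1 (Dl 0) p j - l *: iter m (Dl 0) p j)%R.
Proof.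
elim: m => [|m IH].
  apply: functional_extensionality => j; rewrite /= /Dl subr0 scalerBl addrA //.
rewrite [LHS]/= IH; apply: functional_extensionality => j.
rewrite /Dl /=; exact: polyid.
Qed.

Lemma iter_Dl m l p x :
  Fp (iter m (Dl 0) (Dl l p)) x = Fp (iter m.+1 (Dl 0) p) x - l * Fp (iter m (Dl 0) p) x.
Proof. by rewrite iter_Dl_fun Fp_lin. Qed.

Lemma base p sg : (tsize p <= 2)%N -> triple (G p) sg -> False.
Proof.
move=> hs [t0 [t1 [t2 [h01 [h12 [h20 [g0 [g1 g2]]]]]]]].
set k := fl t0; have [hk1 hk2] := fl_spec t0; rewrite -/k in hk1 hk2.
have Gk x : IZR k <= x < IZR k + 1 -> G p x = sgZ k * Fp p (x - IZR k).
  exact: G_open.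
have Gk1 x : IZR k + 1 <= x < IZR k + 2 -> G p x = - sgZ k * Fp p (x - IZR k - 1).
  move=> hx; rewrite (@G_open r eta p (Z.add k 1) x); last by rewrite plus_IZR; lra.
  by rewrite sgZ_succ plus_IZR; congr (_ * Fp p _); ring.
have sq := sgZ_sq k.
case: (Rlt_le_dec t2 (IZR k + 1)) => c2.
  rewrite !Gk in g0 g1 g2; try lra.
  apply: (@L2 r eta p (sg * sgZ k) (t0 - IZR k) (t1 - IZR k) (t2 - IZR k) hs); try lra.
case: (Rlt_le_dec t1 (IZR k + 1)) => c1.
  rewrite Gk in g0; try lra. rewrite Gk in g1; try lra. rewrite Gk1 in g2; try lra.
  apply: (@L2 r eta p (- sg * sgZ k) (t2 - IZR k - 1) (t0 - IZR k) (t1 - IZR k) hs); try lra.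
rewrite Gk in g0; try lra. rewrite Gk1 in g1; try lra. rewrite Gk1 in g2; try lra.
apply: (@L2 r eta p (sg * sgZ k) (t1 - IZR k - 1) (t2 - IZR k - 1) (t0 - IZR k) hs); try lra.
Qed.

Lemma chain n : forall p sg, (tsize p <= n + 2)%N ->
  (forall m, (m < n)%N -> bnd (iter m (Dl 0) p)) -> triple (G p) sg -> False.
Proof.
elim: n => [|n IH] p sg hs hb ht.
  exact: (@base p sg hs ht).
case: (leqP (tsize p) 2) => h2; first exact: (@base p sg h2 ht).
have H0' : tsize p <> 0%N by move=> E; rewrite E in h2.
have [j nz] := @tsize_nz r p H0'.
have hb0 : bnd p by exact: (hb 0%N).
apply: (IH (Dl (eta j) p) (- sg)).
- have := @tsize_Dl_lt r eta p j nz; move: hs; rewrite addSn => u1 u2; rewrite -ltnS; exact: leq_trans u2 u1.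
- move=> m hm; rewrite /bnd !iter_Dl.
  have := hb m.+1 hm; have := hb m (ltn_trans hm (ltnSn n)); rewrite /bnd => H1 H2; rewrite H1 H2; ring.
- exact: step.
Qed.
End CH.
Lemma mono_conv a b (h : R -> R) sg : (sg = 1 \/ sg = -1) ->
  (forall x y, a <= x -> x <= y -> y < b -> sg * h x <= sg * h y) ->
  monotone_on_Ico a b h.
Proof.
move=> [->|->] H; [left|right] => x y hx hxy hy; have := H x y hx hxy hy; lra.
Qed.

Lemma inf_arg (g : R -> R) : (forall x, g (x + 1) = - g x) ->
  (forall t0 t1 t2, t0 < t1 -> t1 < t2 -> t2 < t0 + 1 -> 0 < g t0 -> g t1 < 0 -> 0 < g t2 -> False) ->
  exists x0, forall c, x0 < c < x0 + 1 -> g c <= 0.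
Proof.
move=> ga nt.
case: (classic (forall x, g x = 0)) => hz.
  by exists 0 => c _; rewrite hz; lra.
have [a ha] : exists a, 0 < g a.
  apply: NNPP => Hn; apply: hz => x.
  case: (Rtotal_order (g x) 0) => [h|[h|h]] //.
  - exfalso; apply: Hn; exists (x + 1); rewrite ga; lra.
  - exfalso; apply: Hn; by exists x.
pose E := fun y => forall n, a <= n <= a + 1 -> g n < 0 -> y <= n.
have Eb : bound E.
  exists (a + 1) => y Ey; apply: Ey; [lra| rewrite ga; lra].
have Ea : E a by move=> n [hn _] _.
have [m [mub mlub]] := completeness E Eb (ex_intro _ a Ea).
have ma : a <= m by apply: mub.
have ma1 : m <= a + 1.
  apply: mlub => y Ey; apply: Ey; [lra| rewrite ga; lra].
have Hi : forall x, a <= x < m -> 0 <= g x.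
  move=> x hx; apply: Rnot_lt_le => hgx.
  have : m <= x.
    apply: mlub => y Ey; apply: Ey => //; lra.
  lra.
have Hii : forall x, m < x < a + 1 -> g x <= 0.
  move=> x hx; apply: Rnot_lt_le => hgx.
  have nE : ~ E x by move=> Ex; have := mub x Ex; lra.
  apply: nE => n hn gn; apply: Rnot_lt_le => nx.
  have an : a < n.
    case: (Rle_lt_or_eq_dec _ _ (proj1 hn)) => // e; rewrite -e in gn; lra.
  exact: (nt a n x an nx ltac:(lra) ha gn hgx).
exists m => c hc.
case: (Rlt_le_dec c (a + 1)) => hca; first by apply: Hii; lra.
have -> : c = (c - 1) + 1 by ring.
rewrite ga; have := Hi (c - 1) ltac:(lra); lra.
Qed.

Lemma window (g : R -> R) x0 : (forall x, g (x + 1) = - g x) ->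
  (forall c, x0 < c < x0 + 1 -> g c <= 0) ->
  forall k, exists sg, (sg = 1 \/ sg = -1) /\
    forall c, x0 + IZR k < c < x0 + IZR k + 1 -> 0 <= sg * g c.
Proof.
move=> ga H k; exists (- sgZ k); split.
  by case: (sgZ_pm k) => ->; [right|left]; ring.
move=> c hc.
have -> : c = (c - IZR k) + IZR k by ring.
rewrite (@anti_iter g ga) -Ropp_mult_distr_l -Rmult_assoc sgZ_sq.
have := H (c - IZR k) ltac:(lra); lra.
Qed.

Lemma cont_eps f a : continuity_pt f a -> forall eps, 0 < eps ->
  exists d, 0 < d /\ forall x, Rabs (x - a) < d -> Rabs (f x - f a) < eps.
Proof.
move=> H eps he; have [d [hd Hd]] := H eps he.
exists d; split => // x hx.
case: (Req_dec x a) => [->|ne]; first by rewrite Rminus_eq_0 Rabs_R0.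
apply: (Hd x); split => //; split => //; auto.
Qed.

Lemma lim_eq f g a : continuity_pt f a -> continuity_pt g a ->
  (forall d, 0 < d -> exists x, Rabs (x - a) < d /\ f x = g x) -> f a = g a.
Proof.
move=> cf cg H; apply: NNPP => ne.
have he : 0 < Rabs (f a - g a) / 2.
  have : f a - g a <> 0 by lra.
  move/Rabs_pos_lt; lra.
have [d1 [hd1 H1]] := @cont_eps f a cf _ he.
have [d2 [hd2 H2]] := @cont_eps g a cg _ he.
have [x [hx ex]] := H (Rmin d1 d2) (Rmin_glb_lt _ _ _ hd1 hd2).
have := H1 x ltac:(have := Rmin_l d1 d2; lra).
have := H2 x ltac:(have := Rmin_r d1 d2; lra).
rewrite ex; split_Rabs; lra.
Qed.
Section FIN.
Variable r : nat.
Variable eta : 'I_r -> R.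
Notation Fp := (@Fp r eta).
Notation Dl := (@Dl r eta).
Notation tsize := (@tsize r).
Notation G := (@G r eta).
Notation bnd := (@bnd r eta).

Lemma dpl_shift p s k x :
  derivable_pt_lim (fun t => s * Fp p (t - k)) x (s * Fp (Dl 0 p) (x - k)).
Proof.
have H2 : derivable_pt_lim (fun t => t - k) x 1.
  have := derivable_pt_lim_minus id (fun _ => k) x 1 0 (derivable_pt_lim_id x)
    (derivable_pt_lim_const k x).
  by rewrite Rminus_0_r.
have HF := derivable_pt_lim_comp _ (Fp p) x _ _ H2 (@dpl_Fp r eta p (x - k)).
have := derivable_pt_lim_scal _ s x _ HF.
by rewrite Rmult_1_r.
Qed.

Lemma cont_shift p s k x : continuity_pt (fun t => s * Fp p (t - k)) x.
Proof. exact: (derivable_continuous_pt _ _ (exist _ _ (dpl_shift p s k x))). Qed.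

Lemma Dn_shift p s k m x :
  Derive_n (fun t => s * Fp p (t - k)) m x = s * Fp (iter m (Dl 0) p) (x - k).
Proof.
elim: m x => [|m IH] x; first by [].
rewrite /= (Derive_ext _ _ x IH).
apply: is_derive_unique; apply/is_derive_Reals; exact: dpl_shift.
Qed.

Lemma bnd_from (h : R -> R) q m : (forall x, h x = G q x) ->
  continuous (Derive_n h m) 1 -> bnd (iter m (Dl 0) q).
Proof.
move=> hG hc.
have hc' : continuity_pt (Derive_n h m) 1 by apply/continuity_pt_filterlim.
have EL : forall x, 0 < x < 1 -> Derive_n h m x = 1 * Fp (iter m (Dl 0) q) (x - 0).
  move=> x hx; rewrite -Dn_shift; apply: Derive_n_ext_loc.
  apply: (locally_interval _ x 0 1) => /=; try lra.
  move=> y hy1 hy2; rewrite hG (@G_open r eta q 0 y) /=; last by lra.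
  by rewrite /sgZ /=.
have ER : forall x, 1 < x < 2 -> Derive_n h m x = -1 * Fp (iter m (Dl 0) q) (x - 1).
  move=> x hx; rewrite -Dn_shift; apply: Derive_n_ext_loc.
  apply: (locally_interval _ x 1 2) => /=; try lra.
  move=> y hy1 hy2; rewrite hG (@G_open r eta q 1 y) /=; last by lra.
  by rewrite /sgZ /=.
have L : Derive_n h m 1 = 1 * Fp (iter m (Dl 0) q) (1 - 0).
  apply: (@lim_eq _ _ 1 hc' (cont_shift (iter m (Dl 0) q) 1 0 1)) => d hd.
  exists (1 - Rmin d 1 / 2); split.
    have := Rmin_l d 1; have := Rmin_r d 1; have : 0 < Rmin d 1 by apply: Rmin_glb_lt; lra.
    split_Rabs; lra.
  apply: EL; have := Rmin_r d 1; have : 0 < Rmin d 1 by apply: Rmin_glb_lt; lra. lra.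
have R' : Derive_n h m 1 = -1 * Fp (iter m (Dl 0) q) (1 - 1).
  apply: (@lim_eq _ _ 1 hc' (cont_shift (iter m (Dl 0) q) (-1) 1 1)) => d hd.
  exists (1 + Rmin d 1 / 2); split.
    have := Rmin_l d 1; have := Rmin_r d 1; have : 0 < Rmin d 1 by apply: Rmin_glb_lt; lra.
    split_Rabs; lra.
  apply: ER; have := Rmin_r d 1; have : 0 < Rmin d 1 by apply: Rmin_glb_lt; lra. lra.
rewrite /bnd; move: L R'; rewrite Rminus_0_r Rminus_diag => ->; lra.
Qed.

Lemma mono_main q w sg : bnd q ->
  (forall c, w < c < w + 1 -> 0 <= sg * G (Dl 0 q) c) ->
  forall x y, w <= x -> x <= y -> y < w + 1 -> sg * G q x <= sg * G q y.
Proof.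
move=> hb H x y hx hxy hy.
case: (Rle_lt_or_eq_dec _ _ hxy) => hxy'; last by rewrite hxy'; lra.
apply: Rnot_lt_le => Hc.
have Hc' : sg * (exp (- 0 * x) * G q x) > sg * (exp (- 0 * y) * G q y).
  by rewrite Ropp_0 !Rmult_0_l exp_0 !Rmult_1_l; lra.
have [c [hc hn]] := @pmvt r eta 0 q sg x y hb hxy' ltac:(lra) Hc'.
have := H c ltac:(lra); lra.
Qed.

Lemma mono_small q k sg0 : (forall b, 0 <= sg0 * Fp (Dl 0 q) b) ->
  forall x y, IZR k <= x -> x <= y -> y < IZR k + 1 ->
  sg0 * sgZ k * G q x <= sg0 * sgZ k * G q y.
Proof.
move=> H x y hx hxy hy.
case: (Rle_lt_or_eq_dec _ _ hxy) => hxy'; last by rewrite hxy'; lra.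
apply: Rnot_lt_le => Hc.
rewrite (@G_open r eta q k x) in Hc; last lra.
rewrite (@G_open r eta q k y) in Hc; last lra.
have Hc' : (sg0 * sgZ k) * (exp (- 0 * x) * (sgZ k * Fp q (x - IZR k))) >
           (sg0 * sgZ k) * (exp (- 0 * y) * (sgZ k * Fp q (y - IZR k))).
  by rewrite Ropp_0 !Rmult_0_l exp_0 !Rmult_1_l; lra.
have [c [hc hn]] := @core_mvt r eta 0 q (sgZ k) (IZR k) (sg0 * sgZ k) x y hxy' Hc'.
have E : sg0 * sgZ k * (sgZ k * Fp (Dl 0 q) (c - IZR k)) =
          sg0 * Fp (Dl 0 q) (c - IZR k) * (sgZ k * sgZ k) by ring.
rewrite E sgZ_sq Rmult_1_r in hn.
have := H (c - IZR k); lra.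
Qed.
End FIN.
Theorem mainTheorem6 (r : nat) (eta : 'I_r -> R) (q : 'I_r -> {poly R})
  (h : R -> R) :
  injective eta ->
  (forall j : 'I_r, q j != 0%R) ->
  let gamma := (\sum_(j < r) size (q j))%N in
  ((2 <= gamma)%N ->
     C_n (gamma - 2) h /\ abs_cont (Derive_n h (gamma - 2))) ->
  (forall x : R, h (x + 1) = - h x) ->
  (forall x : R, 0 <= x < 1 ->
     h x = (\sum_(j < r) (q j).[x] * exp (eta j * x))%R) ->
  exists x0 : R, forall k : Z,
    monotone_on_Ico (x0 + IZR k) (x0 + IZR k + 1) h.
Proof.
move=> _ _ gamma hreg hanti hform.
have hG : forall x, h x = @G r eta q x.
  move=> x; rewrite /G; have [h1 h2] := fl_spec x.
  have := @anti_iter h hanti (fl x) (x - IZR (fl x)).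
  have -> : x - IZR (fl x) + IZR (fl x) = x by ring.
  move=> ->; rewrite hform //; lra.
have tq : @tsize r q = gamma by [].
case: (leqP 2 gamma) => hg.
  have [hC _] := hreg hg.
  have hb : forall m, (m <= gamma - 2)%N -> @bnd r eta (iter m (@Dl r eta 0) q).
    move=> m hm; apply: (@bnd_from r eta h q m hG); have [_ hc] := hC m hm 1; exact: hc.
  have hnt : forall t0 t1 t2, t0 < t1 -> t1 < t2 -> t2 < t0 + 1 ->
      0 < @G r eta (@Dl r eta 0 q) t0 -> @G r eta (@Dl r eta 0 q) t1 < 0 -> 0 < @G r eta (@Dl r eta 0 q) t2 -> False.
    move=> t0 t1 t2 h01 h12 h20 g0 g1 g2.
    apply: (@chain r eta (gamma - 2) (@Dl r eta 0 q) 1).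
    - rewrite subnK //; rewrite -tq; exact: tsize_Dl.
    - move=> m hm; rewrite -iterSr; apply: hb; exact: hm.
    - exists t0, t1, t2; repeat split; lra.
  have [x0 Hx0] := @inf_arg _ (@G_anti r eta (@Dl r eta 0 q)) hnt.
  exists x0 => k.
  have [sg [hsg Hsg]] := @window _ x0 (@G_anti r eta (@Dl r eta 0 q)) Hx0 k.
  apply: (@mono_conv _ _ h sg hsg) => x y hx hxy hy; rewrite !hG.
  apply: (@mono_main r eta q (x0 + IZR k) sg (hb 0%N (leq0n _)) Hsg) => //.
have ts1 : (@tsize r (@Dl r eta 0 q) <= 1)%N.
  have := @tsize_Dl r eta 0 q; rewrite tq => u; apply: leq_trans u _; by rewrite -ltnS.
have [sg0 [hsg0 Hsg0]] : exists sg0, (sg0 = 1 \/ sg0 = -1) /\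
    forall b, 0 <= sg0 * @Fp r eta (@Dl r eta 0 q) b.
  case: (classic (exists a, 0 < @Fp r eta (@Dl r eta 0 q) a)) => [[a ha]|hn].
    exists 1; split; first by left.
    move=> b; apply: Rnot_lt_le => hb.
    case: (Rtotal_order a b) => [ab|[ab|ab]].
    - apply: (@L1 r eta _ 1 a b ts1 ab); lra.
    - subst; lra.
    - apply: (@L1 r eta _ (-1) b a ts1 ab); lra.
  exists (-1); split; first by right.
  move=> b; apply: Rnot_lt_le => hb; apply: hn; exists b; lra.
exists 0 => k.
have hs : sg0 * sgZ k = 1 \/ sg0 * sgZ k = -1.
  by case: hsg0 => ->; case: (sgZ_pm k) => ->; [left|right|right|left]; ring.
apply: (@mono_conv _ _ h _ hs) => x y hx hxy hy; rewrite !hG.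
rewrite Rplus_0_l in hx hy.
exact: (@mono_small r eta q k sg0 Hsg0 x y hx hxy hy).
Qed.
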